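(* Let $\mathbf B$ be a basic algebra over an algebraically closed field $\mathbbm k$ given by a quiver $\Gamma$ with relations, and let $i\ne j$ be vertices of $\Gamma$ such that no arrow of $\Gamma$ ends at $i$ and no arrow of $\Gamma$ starts at $j$. Let $\mathbf A$ be obtained from $\mathbf B$ by gluing the components corresponding to $i$ and $j$. Then there is an equivalence of categories $\mathbf B\text{-}\mathrm{mod}/\langle\bar{\mathbf B}_i,\bar{\mathbf B}_j\rangle\simeq\mathbf A\text{-}\mathrm{mod}/\langle\bar{\mathbf A}_{ij}\rangle$.
   Context: All algebras are finite-dimensional over $\mathbbm k$, and $\mathbf C\text{-}\mathrm{mod}$ is the category of finitely generated left $\mathbf C$-modules. For a basic algebra $\mathbf B$ with $\mathbf B/\operatorname{rad}\mathbf B=\prod_{k=1}^m\bar{\mathbf B}_k$, $\bar{\mathbf B}_k\cong\mathbbm k$ (the $\bar{\mathbf B}_k$ corresponding to the vertices of the quiver of $\mathbf B$ and also regarded as the simple $\mathbf B$-modules), gluing the components $\bar{\mathbf B}_i$ and $\bar{\mathbf B}_j$ produces the algebra $\mathbf A$ which is the preimage in $\mathbf B$ of the subalgebra $\{(\lambda_1,\dots,\lambda_m):\lambda_i=\lambda_j\}$ of $\mathbf B/\operatorname{rad}\mathbf B$. Its quiver is obtained by identifying $i$ and $j$ into one vertex $(ij)$, and $\bar{\mathbf A}_{ij}$ denotes the simple $\mathbf A$-module corresponding to $(ij)$. For a category $\mathcal C$ and a set $\mathfrak M$ of objects, $\mathcal C/\langle\mathfrak M\rangle$ denotes the quotient of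 $\mathcal C$ by the ideal of morphisms factoring through finite direct sums of objects from $\mathfrak M$. *)

(* Defs.v *)
From HB Require Import structures.
From mathcomp Require Import all_boot all_order all_algebra all_field.
Set Implicit Arguments. Unset Strict Implicit. Unset Printing Implicit Defensive.
Import GRing.Theory.
Local Open Scope ring_scope.

(* Finite-dimensional algebras are [falgType F]; modules are finite-dimensional
   left modules, represented (up to isomorphism) as matrix representations
   acting on column vectors: [a . v = ract M a *m v]. *)

Section Radical.
Variables (F : fieldType) (B : falgType F).

Definition left_ideal (L : {vspace B}) : Prop :=
  forall a x : B, x \in L -> a * x \in L.

Definition maximal_left_ideal (L : {vspace B}) : Prop :=
  [/\ left_ideal L, L != fullv &
      forall L' : {vspace B}, left_ideal L' -> (L <= L')%VS -> L' != fullv -> L' = L].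

Definition in_rad (x : B) : Prop :=
  forall L, maximal_left_ideal L -> x \in L.

Definition in_rad2 (x : B) : Prop :=
  exists s : seq (B * B),
    (forall p, p \in s -> in_rad p.1 /\ in_rad p.2) /\
    x = \sum_(p <- s) p.1 * p.2.
End Radical.

Section Basic.
Variables (F : fieldType) (B : falgType F) (m : nat) (pi : 'I_m -> B -> F).

(* [pi] identifies B / rad B with the product of m copies of F:
   pi k is the k-th component B -> B/rad B = prod_k F -> F, i.e. the action
   of B on the simple module \bar B_k. *)
Definition top_chars : Prop :=
  [/\ (forall k (c : F) (x y : B), pi k (c *: x + y) = c * pi k x + pi k y),
      (forall k (x y : B), pi k (x * y) = pi k x * pi k y),
      (forall k, pi k 1 = 1),
      (forall x, (forall k, pi k x = 0) <-> in_rad x) &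
      (forall lam : 'I_m -> F, exists x : B, forall k, pi k x = lam k)].

(* Arrows a -> b of the quiver correspond to a basis of e_b (rad/rad^2) e_a,
   i.e. of the classes x of rad B mod rad^2 B with y x = pi_b(y) x and
   x y = pi_a(y) x modulo rad^2 B. *)
Definition arrow_elt (a b : 'I_m) (x : B) : Prop :=
  in_rad x /\
  forall y : B, in_rad2 (y * x - pi b y *: x) /\ in_rad2 (x * y - pi a y *: x).

Definition no_arrow_ends_at (i : 'I_m) : Prop :=
  forall a x, arrow_elt a i x -> in_rad2 x.

Definition no_arrow_starts_at (j : 'I_m) : Prop :=
  forall b x, arrow_elt j b x -> in_rad2 x.

(* The glued algebra A: preimage of {lambda_i = lambda_j} in B. *)
Definition glued (i j : 'I_m) (x : B) : Prop := pi i x = pi j x.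
End Basic.

(* Finite-dimensional left modules over the subalgebra S of B. *)
Record rep (F : fieldType) (B : falgType F) (S : B -> Prop) : Type := Rep {
  rdim : nat;
  ract : B -> 'M[F]_rdim;
  ract_lin : forall (c : F) (x y : B), S x -> S y ->
               ract (c *: x + y) = c *: ract x + ract y;
  ract_mul : forall x y : B, S x -> S y -> ract (x * y) = ract x *m ract y;
  ract1 : ract 1 = 1%:M
}.

Section Cat.
Variables (F : fieldType) (B : falgType F) (m : nat) (pi : 'I_m -> B -> F).
Variables (S : B -> Prop) (T : 'I_m -> Prop).

Definition is_hom (M N : rep S) (f : 'M[F]_(rdim N, rdim M)) : Prop :=
  forall x, S x -> f *m ract M x = ract N x *m f.

(* X is a finite direct sum of the simple modules \bar B_k, k in T. *)
Definition simple_sum (X : rep S) : Prop :=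
  exists c : 'I_(rdim X) -> 'I_m,
    (forall k, T (c k)) /\
    forall x, S x -> ract X x = diag_mx (\row_k pi (c k) x).

Definition in_ideal (M N : rep S) (f : 'M[F]_(rdim N, rdim M)) : Prop :=
  exists X : rep S, simple_sum X /\
    exists (g : 'M[F]_(rdim X, rdim M)) (h : 'M[F]_(rdim N, rdim X)),
      [/\ is_hom g, is_hom h & f = h *m g].

(* Equality of morphisms in the quotient category. *)
Definition qeq (M N : rep S) (f g : 'M[F]_(rdim N, rdim M)) : Prop :=
  [/\ is_hom f, is_hom g & in_ideal (f - g)].
End Cat.

(* Equivalence of the quotient categories (S1-mod / <T1>) and (S2-mod / <T2>):
   a functor on the quotient which is full, faithful and essentially
   surjective. *)
Definition qcat_equiv (F : fieldType) (B : falgType F) (m : nat)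
    (pi : 'I_m -> B -> F) (S1 : B -> Prop) (T1 : 'I_m -> Prop)
    (S2 : B -> Prop) (T2 : 'I_m -> Prop) : Prop :=
  exists (Fo : rep S1 -> rep S2)
         (Fm : forall M N : rep S1,
                 'M[F]_(rdim N, rdim M) -> 'M[F]_(rdim (Fo N), rdim (Fo M))),
  (forall M N f, is_hom f -> is_hom (Fm M N f)) /\
  (forall M N f g, qeq pi T1 f g -> qeq pi T2 (Fm M N f) (Fm M N g)) /\
  (forall M, qeq pi T2 (Fm M M 1%:M) 1%:M) /\
  (forall M N P f g, @is_hom F B S1 M N f -> @is_hom F B S1 N P g ->
        qeq pi T2 (Fm M P (g *m f)) (Fm N P g *m Fm M N f)) /\
  (forall M N f g, is_hom f -> is_hom g ->
        qeq pi T2 (Fm M N f) (Fm M N g) -> qeq pi T1 f g) /\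
  (forall M N h, is_hom h -> exists f, @is_hom F B S1 M N f /\ qeq pi T2 (Fm M N f) h) /\
  (forall Y : rep S2, exists (X : rep S1)
          (u : 'M[F]_(rdim Y, rdim (Fo X))) (v : 'M[F]_(rdim (Fo X), rdim Y)),
        [/\ is_hom u, is_hom v, qeq pi T2 (v *m u) 1%:M & qeq pi T2 (u *m v) 1%:M]).

(* Main.v *)
Require Import Defs.
From HB Require Import structures.
From mathcomp Require Import all_boot all_order all_algebra all_field.
From Stdlib Require Import Classical.
Set Implicit Arguments. Unset Strict Implicit. Unset Printing Implicit Defensive.
Import GRing.Theory.
Local Open Scope ring_scope.

Section Alg.
Variables (F : fieldType) (B : falgType F) (m : nat) (pi : 'I_m -> B -> F).
Hypothesis hpi : top_chars pi.

Lemma piDZ k c x y : pi k (c *: x + y) = c * pi k x + pi k y.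
Proof. by case: hpi. Qed.
Lemma piM k x y : pi k (x * y) = pi k x * pi k y.
Proof. by case: hpi. Qed.
Lemma pi1 k : pi k 1 = 1.
Proof. by case: hpi. Qed.
Lemma rad_iff x : (forall k, pi k x = 0) <-> in_rad x.
Proof. by case: hpi. Qed.
Lemma pi_surj (lam : 'I_m -> F) : exists x : B, forall k, pi k x = lam k.
Proof. by case: hpi. Qed.

Lemma pi0 k : pi k 0 = 0.
Proof.
by have := piDZ k (-1) 0 0; rewrite scaleN1r addNr mulN1r addNr.
Qed.
Lemma piD k x y : pi k (x + y) = pi k x + pi k y.
Proof. by have := piDZ k 1 x y; rewrite scale1r mul1r. Qed.
Lemma piZ k c x : pi k (c *: x) = c * pi k x.
Proof. by have := piDZ k c x 0; rewrite !addr0 pi0 addr0. Qed.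
Lemma piN k x : pi k (- x) = - pi k x.
Proof. by rewrite -scaleN1r piZ mulN1r. Qed.
Lemma piB k x y : pi k (x - y) = pi k x - pi k y.
Proof. by rewrite piD piN. Qed.
Lemma pi_sum k (I : Type) (r : seq I) (P : pred I) (G : I -> B) :
  pi k (\sum_(a <- r | P a) G a) = \sum_(a <- r | P a) pi k (G a).
Proof. exact: (big_morph (pi k) (piD k) (pi0 k)). Qed.
Lemma piX k x n : pi k (x ^+ n) = pi k x ^+ n.
Proof. by elim: n => [|n IH]; rewrite ?expr0 ?pi1 // !exprS piM IH. Qed.

Lemma pi_surjb (k : 'I_m) : exists x : B, [forall l, pi l x == (l == k)%:R].
Proof.
have [x hx] := pi_surj (fun l => (l == k)%:R).
by exists x; apply/forallP => l; rewrite hx.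
Qed.
Definition t (k : 'I_m) : B := xchoose (pi_surjb k).
Lemma pit k l : pi l (t k) = (l == k)%:R.
Proof. by have /forallP/(_ l)/eqP := xchooseP (pi_surjb k). Qed.

Definition phiJ (b : B) : B := b - \sum_k pi k b *: t k.
Lemma pi_phiJ k b : pi k (phiJ b) = 0.
Proof.
rewrite piB pi_sum (bigD1 k) //= piZ pit eqxx mulr1 big1 ?addr0 ?subrr //.
by move=> l /negbTE nl; rewrite piZ pit eq_sym nl mulr0.
Qed.

Definition Jv : {vspace B} := <<[seq phiJ b | b <- vbasis (fullv : {vspace B})]>>%VS.

Lemma memJ x : x \in Jv <-> (forall k, pi k x = 0).
Proof.
split.
  move=> xJ k.
  have := coord_span (X := in_tuple [seq phiJ b | b <- vbasis (fullv : {vspace B})]) xJ.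
  move->; rewrite pi_sum big1 // => l _.
  rewrite piZ.
  have /mapP[b _ ->] : (in_tuple [seq phiJ b | b <- vbasis (fullv : {vspace B})])`_l
          \in [seq phiJ b | b <- vbasis (fullv : {vspace B})].
    exact: mem_nth (ltn_ord l).
  by rewrite pi_phiJ mulr0.
move=> h.
have ex : x = phiJ x.
  by rewrite /phiJ big1 ?subr0 // => k _; rewrite h scale0r.
rewrite ex (coord_vbasis (memvf x)).
have -> : forall n (c : 'I_n -> F) (u : 'I_n -> B),
   phiJ (\sum_(l < n) c l *: u l) = \sum_(l < n) c l *: phiJ (u l).
  move=> n c u; elim: n c u => [|n IH] c u.
    by rewrite !big_ord0 /phiJ big1 ?subr0 // => k _; rewrite pi0 scale0r.
  rewrite !big_ord_recr /= -IH /phiJ.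
  rewrite (eq_bigr (fun k => pi k (\sum_(i < n) c (widen_ord (leqnSn n) i) *: u (widen_ord (leqnSn n) i)) *: t k + (c ord_max * pi k (u ord_max)) *: t k)); last first.
    by move=> k _; rewrite piD piZ scalerDl.
  rewrite big_split /=.
  rewrite [X in _ - (_ + X)](eq_bigr (fun k => c ord_max *: (pi k (u ord_max) *: t k))); last first.
    by move=> k _; rewrite scalerA.
  by rewrite -scaler_sumr scalerBr opprD addrACA.
apply: memv_suml => l _; apply: memvZ; apply: memv_span.
by apply: map_f; apply: mem_nth; rewrite size_tuple.
Qed.

Lemma JmulL a x : x \in Jv -> a * x \in Jv.
Proof. by move/memJ=> h; apply/memJ => k; rewrite piM h mulr0. Qed.
Lemma JmulR a x : x \in Jv -> x * a \in Jv.
Proof. by move/memJ=> h; apply/memJ => k; rewrite piM h mul0r. Qed.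

Lemma left_ideal_prodJ (X : {vspace B}) : left_ideal (Jv * X)%VS.
Proof.
move=> a x xJ.
have : a * x \in (<[a]> * (Jv * X))%VS by rewrite memv_mul ?memv_line.
rewrite prodvA; apply/subvP; apply: prodvSl.
by apply/prodvP => u v /vlineP[c ->] vJ; rewrite -scalerAl memvZ ?JmulL.
Qed.

Lemma Jchain n : (Jv ^+ n.+2 <= Jv ^+ n.+1)%VS.
Proof.
elim: n => [|n IH].
  by rewrite expv2 expv1; apply/prodvP => u v _ vJ; rewrite JmulL.
by rewrite (expvSl _ n.+2) (expvSl _ n.+1) prodvSr.
Qed.

Lemma Jstab : exists n, (Jv ^+ n.+2 = Jv ^+ n.+1)%VS.
Proof.
suff : forall n, (exists n, (Jv ^+ n.+2 = Jv ^+ n.+1)%VS) \/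
         (\dim (Jv ^+ n.+1)%VS + n <= \dim Jv)%N.
  move/(_ (\dim Jv).+1) => [//|]; rewrite addnS ltnNge leq_addl //.
elim=> [|n [h|IH]]; first by right; rewrite addn0 expv1.
  by left.
have [e|ne] := eqVneq (Jv ^+ n.+2)%VS (Jv ^+ n.+1)%VS; first by left; exists n.
right; apply: leq_trans IH; rewrite addnS -addSn leq_add2r.
rewrite ltn_neqAle dimvS ?Jchain // andbT.
apply: contra ne => /eqP hd.
by rewrite eqEdim Jchain /= hd.
Qed.

Lemma max_sub (M : {vspace B}) : forall n (L : {vspace B}),
  (\dim M - \dim L <= n)%N -> left_ideal L -> (L <= M)%VS -> L != M ->
  exists L', [/\ left_ideal L', (L <= L')%VS, (L' <= M)%VS, L' != M &
     forall K, left_ideal K -> (L' <= K)%VS -> (K <= M)%VS -> K != M -> K = L'].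
Proof.
elim=> [|n IH] L hd liL LM nLM.
  exfalso; move: hd; rewrite leqn0 subn_eq0 => hd.
  by move: nLM; rewrite eqEdim LM hd.
case: (classic (exists K, [/\ left_ideal K, (L <= K)%VS, (K <= M)%VS, K != M & K != L])).
  move=> [K [liK LK KM nKM nKL]].
  have ltd : (\dim L < \dim K)%N.
    rewrite ltn_neqAle (dimvS LK) andbT; apply: contra nKL => /eqP hd'.
    by rewrite eq_sym eqEdim LK hd' leqnn.
  have hK : (\dim M - \dim K <= n)%N.
    by rewrite -ltnS; exact: leq_trans (ltn_sub2l (leq_trans ltd (dimvS KM)) ltd) hd.
  have [L' [h1 h2 h3 h4 h5]] := IH K hK liK KM nKM.
  by exists L'; split => //; apply: subv_trans h2.
move=> nex; exists L; split => // K liK LK KM nKM.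
apply: NNPP => nKL; apply: nex; exists K; split => //.
by apply/eqP.
Qed.

Lemma nakayama (M : {vspace B}) : left_ideal M -> (Jv * M)%VS = M -> M = 0%VS.
Proof.
move=> liM JM; apply: NNPP => nM0.
have li0 : left_ideal (0%VS : {vspace B}).
  by move=> a x; rewrite !memv0 => /eqP->; rewrite mulr0.
have nz : (0%VS : {vspace B}) != M by rewrite eq_sym; apply/eqP.
have [L [liL _ LM nLM Lmax]] := @max_sub M _ 0%VS (leqnn _) li0 (sub0v M) nz.
have [v vM vL] : exists2 v, v \in M & v \notin L.
  apply/subvPn; apply: contra nLM => ML; apply/eqP; apply: subv_anti; by rewrite LM ML.
pose K (X : {vspace B}) := (X * <[v]> + L)%VS.
have Kli X : left_ideal X -> left_ideal (K X).
  move=> liX a w /memv_addP[u /memv_cosetP[x xX ->] [l lL ->]].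
  rewrite mulrDr mulrA; apply: memv_add; last exact: liL.
  by apply/memv_cosetP; exists (a * x) => //; exact: liX.
have LK X : (L <= K X)%VS by apply: addvSr.
have KM X : (K X <= M)%VS.
  rewrite subv_add LM andbT; apply/prodvP => x y _ /vlineP[c ->].
  by rewrite -scalerAr memvZ // liM.
have vK (X : {vspace B}) : 1 \in X -> v \in K X.
  move=> X1; apply/memv_addP; exists v; last by exists 0; rewrite ?mem0v ?addr0.
  by apply/memv_cosetP; exists 1; rewrite ?mul1r.
pose Av := (amulr v @^-1: L)%VS.
have memAv u : (u \in Av) = (u * v \in L) by rewrite -memv_preim lfunE.
have liAv : left_ideal Av.
  by move=> a u; rewrite !memAv -mulrA; apply: liL.
have KfM : K fullv = M.
  apply: NNPP => nKM; have := Lmax (K fullv) (Kli _ (fun a x _ => memvf _)) (LK _) (KM _).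
  move=> /(_ (introN eqP nKM)) eKL; have := vK _ (memvf 1); rewrite eKL => h.
  by rewrite h in vL.
have maxAv : maximal_left_ideal Av.
  split => //.
    by apply/negP => /eqP Af; move: (memvf (1 : B)); rewrite -Af memAv mul1r (negbTE vL).
  move=> L' liL' AL' nL'f; apply: subv_anti; rewrite AL' andbT.
  have [eKM|nKM] := eqVneq (K L') M.
    exfalso; have := vM; rewrite -eKM => /memv_addP[u /memv_cosetP[x xL' ->] [l lL ev]].
    have : 1 - x \in Av by rewrite memAv mulrBl mul1r {1}ev addrAC subrr add0r.
    move=> /(subvP AL') h1; have h2 : 1 \in L' by rewrite -(subrK x 1) memvD.
    apply/negP: nL'f; rewrite negbK; apply/eqP; apply: subv_anti; rewrite subvf /=.
    by apply/subvP => y _; rewrite -(mulr1 y); apply: liL'.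
  have eKL := Lmax (K L') (Kli _ liL') (LK _) (KM _) nKM.
  apply/subvP => u uL'; rewrite memAv -eKL; apply/memv_addP; exists (u * v).
    by apply/memv_cosetP; exists u.
  by exists 0; rewrite ?mem0v ?addr0.
have JA x : x \in Jv -> x * v \in L.
  move=> /memJ /rad_iff xr; rewrite -memAv; exact: xr.
have : (Jv * M <= L)%VS.
  apply/prodvP => x w xJ; rewrite -KfM => /memv_addP[u /memv_cosetP[y _ ->] [l lL ->]].
  by rewrite mulrDr mulrA memvD ?JA ?JmulR ?liL.
rewrite JM => ML; apply/negP: nLM; rewrite negbK; apply/eqP; apply: subv_anti; by rewrite LM ML.
Qed.

Lemma Jnil : exists N, (Jv ^+ N)%VS = 0%VS.
Proof.
have [n hn] := Jstab; exists n.+1; apply: nakayama.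
  by rewrite expvSl; exact: left_ideal_prodJ.
by rewrite -expvSl.
Qed.

Lemma rad2_J2 x : in_rad2 x -> x \in (Jv * Jv)%VS.
Proof.
move=> [s [hs ->]]; rewrite big_seq; apply: memv_suml => p ps.
have [h1 h2] := hs p ps; apply: memv_mul; apply/memJ; exact/rad_iff.
Qed.

Lemma inradJ x : x \in Jv -> in_rad x.
Proof. by move/memJ/rad_iff. Qed.

Lemma sumt_1 : \sum_a t a - 1 \in Jv.
Proof.
apply/memJ => k; rewrite piB pi_sum pi1 (bigD1 k) //= pit eqxx big1 ?addr0 ?subrr //.
by move=> a /negbTE na; rewrite pit eq_sym na.
Qed.

Lemma pitt a b : a != b -> t a * t b \in Jv.
Proof.
move=> nab; apply/memJ => k; rewrite piM !pit.
by case: (k =P a) => [->|]; rewrite ?(negbTE nab) ?mulr0 ?mul0r.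
Qed.

Lemma tiJ (i : 'I_m) : no_arrow_ends_at pi i ->
  forall z, z \in Jv -> t i * z \in (Jv * Jv)%VS.
Proof.
move=> hna z zJ.
have ha a : t i * z * t a \in (Jv * Jv)%VS.
  apply: rad2_J2; apply: (hna a); split.
    by apply: inradJ; rewrite JmulR // JmulL.
  move=> y; split.
    exists [:: ((y - pi i y *: 1) * t i, z * t a)]; split.
      move=> p; rewrite inE => /eqP -> /=; split; last by apply: inradJ; rewrite JmulR.
      apply/rad_iff => k; rewrite piM piB piZ pi1 mulr1 pit.
      by case: (k =P i) => [->|]; rewrite ?subrr ?mul0r ?mulr0.
    by rewrite big_seq1 /= !mulrBl -!scalerAl !mul1r !mulrA.
  exists [:: (t i * z, t a * (y - pi a y *: 1))]; split.
    move=> p; rewrite inE => /eqP -> /=; split; first by apply: inradJ; rewrite JmulL.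
    apply/rad_iff => k; rewrite piM piB piZ pi1 mulr1 pit.
    by case: (k =P a) => [->|]; rewrite ?subrr ?mul0r ?mulr0.
  by rewrite big_seq1 /= !mulrBr -!scalerAr !mulr1 !mulrA.
have hs : t i * z * \sum_a t a \in (Jv * Jv)%VS.
  by rewrite mulr_sumr; apply: memv_suml => a _; exact: ha.
have -> : t i * z = t i * z * \sum_a t a - t i * z * (\sum_a t a - 1).
  by rewrite mulrBr mulr1 opprB addrC subrK.
by rewrite memvB // memv_mul ?JmulL ?sumt_1.
Qed.

Lemma tjJ (j : 'I_m) : no_arrow_starts_at pi j ->
  forall z, z \in Jv -> z * t j \in (Jv * Jv)%VS.
Proof.
move=> hna z zJ.
have ha b : t b * z * t j \in (Jv * Jv)%VS.
  apply: rad2_J2; apply: (hna b); split.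
    by apply: inradJ; rewrite JmulR // JmulL.
  move=> y; split.
    exists [:: ((y - pi b y *: 1) * t b, z * t j)]; split.
      move=> p; rewrite inE => /eqP -> /=; split; last by apply: inradJ; rewrite JmulR.
      apply/rad_iff => k; rewrite piM piB piZ pi1 mulr1 pit.
      by case: (k =P b) => [->|]; rewrite ?subrr ?mul0r ?mulr0.
    by rewrite big_seq1 /= !mulrBl -!scalerAl !mul1r !mulrA.
  exists [:: (t b * z, t j * (y - pi j y *: 1))]; split.
    move=> p; rewrite inE => /eqP -> /=; split; first by apply: inradJ; rewrite JmulL.
    apply/rad_iff => k; rewrite piM piB piZ pi1 mulr1 pit.
    by case: (k =P j) => [->|]; rewrite ?subrr ?mul0r ?mulr0.
  by rewrite big_seq1 /= !mulrBr -!scalerAr !mulr1 !mulrA.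
have hs : (\sum_a t a) * z * t j \in (Jv * Jv)%VS.
  by rewrite mulr_suml mulr_suml; apply: memv_suml => a _; exact: ha.
have -> : z * t j = (\sum_a t a) * z * t j - (\sum_a t a - 1) * (z * t j).
  by rewrite mulrBl mul1r opprB addrC mulrA subrK.
by rewrite memvB // memv_mul ?JmulR ?sumt_1.
Qed.

Lemma left_powv (u : B) : (forall z, z \in Jv -> u * z \in (Jv * Jv)%VS) ->
  forall k, (<[u]> * Jv ^+ k.+1 <= Jv ^+ k.+2)%VS.
Proof.
move=> hu; have h0 : (<[u]> * Jv <= Jv * Jv)%VS.
  by apply/prodvP => x z /vlineP[c ->] zJ; rewrite -scalerAl memvZ ?hu.
elim=> [|k IH]; first by rewrite expv1 expv2.
rewrite (expvSl _ k.+1) prodvA (expvSl _ k.+2).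
apply: subv_trans (prodvSl _ h0) _; by rewrite -prodvA -expvSl.
Qed.

Lemma right_powv (u : B) : (forall z, z \in Jv -> z * u \in (Jv * Jv)%VS) ->
  forall k, (Jv ^+ k.+1 * <[u]> <= Jv ^+ k.+2)%VS.
Proof.
move=> hu; have h0 : (Jv * <[u]> <= Jv * Jv)%VS.
  by apply/prodvP => z x zJ /vlineP[c ->]; rewrite -scalerAr memvZ ?hu.
elim=> [|k IH]; first by rewrite expv1 expv2.
rewrite (expvSl _ k.+1) -prodvA (expvSl _ k.+2); exact: prodvSr.
Qed.

Lemma left_pow (u : B) : (forall z, z \in Jv -> u * z \in (Jv * Jv)%VS) ->
  forall k y, y \in Jv -> u ^+ k * y \in (Jv ^+ k.+1)%VS.
Proof.
move=> hu; elim=> [|k IH] y yJ; first by rewrite expr0 mul1r expv1.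
rewrite exprS -mulrA; apply: (subvP (left_powv hu k)); apply: memv_mul; rewrite ?memv_line ?IH //.
Qed.

Lemma right_pow (u : B) : (forall z, z \in Jv -> z * u \in (Jv * Jv)%VS) ->
  forall k y, y \in Jv -> y * u ^+ k \in (Jv ^+ k.+1)%VS.
Proof.
move=> hu; elim=> [|k IH] y yJ; first by rewrite expr0 mulr1 expv1.
rewrite exprSr mulrA; apply: (subvP (right_powv hu k)); apply: memv_mul; rewrite ?memv_line ?IH //.
Qed.

Lemma decompJ (b : B) : b - \sum_l pi l b *: t l \in Jv.
Proof. by apply/memJ => k; exact: pi_phiJ. Qed.

Lemma exists_e (i : 'I_m) : no_arrow_ends_at pi i ->
  exists e : B, (forall b, e * b = pi i b *: e) /\ (forall k, pi k e = (k == i)%:R).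
Proof.
move=> hna; have [N hN] := Jnil.
have hu := tiJ hna.
have z1 : (Jv ^+ N.+1 = 0)%VS by rewrite expvSl hN prodv0.
have z2 : (Jv ^+ N.+2 = 0)%VS by rewrite expvSl z1 prodv0.
exists (t i ^+ N.+1); split; last first.
  by move=> k; rewrite piX pit; case: (k == i); rewrite ?expr1n ?expr0n.
have eJ y : y \in Jv -> t i ^+ N.+1 * y = 0.
  by move=> yJ; apply/eqP; rewrite -memv0 -z2 left_pow.
have et l : l != i -> t i ^+ N.+1 * t l = 0.
  move=> nli; apply/eqP; rewrite -memv0 -z1 exprSr -mulrA left_pow //.
  by apply: pitt; rewrite eq_sym.
move=> b; set w := b - pi i b *: 1.
have hw : t i ^+ N.+1 * w = 0.
  have := eJ _ (decompJ w); rewrite mulrBr mulr_sumr big1 ?subr0 //.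
  move=> l _; rewrite -scalerAr; case: (eqVneq l i) => [->|nli]; last by rewrite et ?scaler0.
  by rewrite /w piB piZ pi1 mulr1 subrr scale0r.
by move: hw; rewrite /w mulrBr -scalerAr mulr1 => /eqP; rewrite subr_eq0 => /eqP.
Qed.

Lemma exists_f (j : 'I_m) : no_arrow_starts_at pi j ->
  exists f : B, (forall b, b * f = pi j b *: f) /\ (forall k, pi k f = (k == j)%:R).
Proof.
move=> hna; have [N hN] := Jnil.
have hu := tjJ hna.
have z1 : (Jv ^+ N.+1 = 0)%VS by rewrite expvSl hN prodv0.
have z2 : (Jv ^+ N.+2 = 0)%VS by rewrite expvSl z1 prodv0.
exists (t j ^+ N.+1); split; last first.
  by move=> k; rewrite piX pit; case: (k == j); rewrite ?expr1n ?expr0n.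
have eJ y : y \in Jv -> y * t j ^+ N.+1 = 0.
  by move=> yJ; apply/eqP; rewrite -memv0 -z2 right_pow.
have et l : l != j -> t l * t j ^+ N.+1 = 0.
  move=> nlj; apply/eqP; rewrite -memv0 -z1 exprS mulrA right_pow //.
  exact: pitt.
move=> b; set w := b - pi j b *: 1.
have hw : w * t j ^+ N.+1 = 0.
  have := eJ _ (decompJ w); rewrite mulrBl mulr_suml big1 ?subr0 //.
  move=> l _; rewrite -scalerAl; case: (eqVneq l j) => [->|nlj]; last by rewrite et ?scaler0.
  by rewrite /w piB piZ pi1 mulr1 subrr scale0r.
by move: hw; rewrite /w mulrBl -scalerAl mul1r => /eqP; rewrite subr_eq0 => /eqP.
Qed.
End Alg.

Section Gen.
Variables (F : fieldType) (B : falgType F) (m : nat) (pi : 'I_m -> B -> F).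
Hypothesis hpi : top_chars pi.
Variable S : B -> Prop.

Definition sract n (c : 'I_n -> 'I_m) (x : B) : 'M[F]_n := diag_mx (\row_k pi (c k) x).

Lemma sract_lin n c (a : F) x y : S x -> S y ->
  sract c (a *: x + y) = a *: @sract n c x + sract c y.
Proof.
move=> _ _; rewrite /sract -linearP; congr diag_mx; apply/matrixP => p q.
by rewrite !mxE piDZ.
Qed.

Lemma sract_mul n c x y : S x -> S y -> sract c (x * y) = @sract n c x *m sract c y.
Proof.
move=> _ _; rewrite /sract mul_diag_mx; apply/matrixP => p q.
by rewrite !mxE piM; case: (p == q); rewrite ?mulr1n ?mulr0n ?mulr0.
Qed.

Lemma sract1 n c : @sract n c 1 = 1%:M.
Proof.
rewrite /sract -diag_const_mx; congr diag_mx; apply/matrixP => p q.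
by rewrite !mxE pi1.
Qed.

Definition srep n (c : 'I_n -> 'I_m) : rep S :=
  @Rep F B S n (sract c) (@sract_lin n c) (@sract_mul n c) (sract1 c).

Lemma sract_const n k0 x : sract (fun _ : 'I_n => k0) x = (pi k0 x)%:M.
Proof. rewrite /sract -diag_const_mx; congr diag_mx; apply/matrixP => p q; by rewrite !mxE. Qed.

Lemma in_ideal0 (T : 'I_m -> Prop) k0 (Tk0 : T k0) (M N : rep S) :
  in_ideal pi T (0 : 'M[F]_(rdim N, rdim M)).
Proof.
exists (srep (fun _ : 'I_0 => k0)); split.
  by exists (fun _ => k0); split => // x _.
exists 0, 0; split; rewrite ?mul0mx //.
  by move=> x _; rewrite mul0mx mulmx0.
by move=> x _; rewrite mul0mx mulmx0.
Qed.

Lemma in_idealD (T : 'I_m -> Prop) (M N : rep S) (u v : 'M[F]_(rdim N, rdim M)) :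
  in_ideal pi T u -> in_ideal pi T v -> in_ideal pi T (u + v).
Proof.
move=> [X1 [[c1 [T1 hX1]] [g1 [h1 [hg1 hh1 ->]]]]].
move=> [X2 [[c2 [T2 hX2]] [g2 [h2 [hg2 hh2 ->]]]]].
pose c12 (k : 'I_(rdim X1 + rdim X2)) := match split k with inl a => c1 a | inr b => c2 b end.
exists (srep c12); split.
  exists c12; split => // k; rewrite /c12; case: (split k) => a //.
exists (col_mx g1 g2), (row_mx h1 h2).
have hrow x : \row_k pi (c12 k) x = row_mx (\row_k pi (c1 k) x) (\row_k pi (c2 k) x).
  apply/matrixP => p q; rewrite !mxE /c12; case: (split q) => a; by rewrite mxE.
split.
- move=> x Sx; rewrite /= /sract hrow diag_mx_row mul_col_mx mul_block_col.
  by rewrite !mul0mx addr0 add0r hg1 // hg2 // hX1 // hX2.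
- move=> x Sx; rewrite /= /sract hrow diag_mx_row mul_mx_row mul_row_block.
  by rewrite !mulmx0 addr0 add0r -hX1 // -hX2 // hh1 // hh2.
- by rewrite mul_row_col.
Qed.

Lemma bi_scalar (T : 'I_m -> Prop) k0 (Tk0 : T k0) (M N : rep S) (d : 'M[F]_(rdim N, rdim M)) :
  (forall a, S a -> d *m ract M a = pi k0 a *: d) ->
  (forall a, S a -> ract N a *m d = pi k0 a *: d) -> in_ideal pi T d.
Proof.
move=> hr hl.
exists (srep (fun _ : 'I_(\rank d) => k0)); split.
  by exists (fun _ => k0); split => // x _.
have [D hD] : exists D, row_base d = D *m d.
  by apply/submxP; rewrite eq_row_base submx_refl.
exists (row_base d), (d *m pinvmx (row_base d)); split.
- move=> x Sx; rewrite /= sract_const mul_scalar_mx hD -mulmxA hr //.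
  by rewrite scalemxAr.
- move=> x Sx; rewrite /= sract_const mul_mx_scalar mulmxA hl //.
  by rewrite scalemxAl.
- by rewrite mulmxKpV // eq_row_base submx_refl.
Qed.

Lemma in_ideal_simple (T : 'I_m -> Prop) k0 (Tk0 : T k0) (M N : rep S) n
  (g : 'M[F]_(n, rdim M)) (h : 'M[F]_(rdim N, n)) :
  (forall a, S a -> g *m ract M a = pi k0 a *: g) ->
  (forall a, S a -> ract N a *m h = pi k0 a *: h) -> in_ideal pi T (h *m g).
Proof.
move=> hg hh; exists (srep (fun _ : 'I_n => k0)); split.
  by exists (fun _ => k0); split => // x _.
exists g, h; split => // x Sx; rewrite /= sract_const.
  by rewrite mul_scalar_mx hg.
by rewrite mul_mx_scalar hh.
Qed.
End Gen.

Section Main.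
Variables (F : fieldType) (B : falgType F) (m : nat) (pi : 'I_m -> B -> F).
Hypothesis hpi : top_chars pi.
Variables (i j : 'I_m) (e f : B).
Hypothesis hij : i != j.
Hypothesis he : forall b, e * b = pi i b *: e.
Hypothesis hpe : forall k, pi k e = (k == i)%:R.
Hypothesis hf : forall b, b * f = pi j b *: f.
Hypothesis hpf : forall k, pi k f = (k == j)%:R.
Hypothesis hfe : f * e = 0.

Local Notation S1 := (fun _ : B => True).
Local Notation T1 := (fun k : 'I_m => k = i \/ k = j).
Local Notation S2 := (glued pi i j).
Local Notation T2 := (fun k : 'I_m => k = i).

Lemma pie_i : pi i e = 1. Proof. by rewrite hpe eqxx. Qed.
Lemma pie_j : pi j e = 0. Proof. by rewrite hpe eq_sym (negbTE hij). Qed.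
Lemma pif_j : pi j f = 1. Proof. by rewrite hpf eqxx. Qed.
Lemma pif_i : pi i f = 0. Proof. by rewrite hpf (negbTE hij). Qed.
Lemma ee : e * e = e. Proof. by rewrite he pie_i scale1r. Qed.
Lemma ef : e * f = 0. Proof. by rewrite he pif_i scale0r. Qed.
Lemma ff : f * f = f. Proof. by rewrite hf pif_j scale1r. Qed.

Lemma gluedDZ c x y : S2 x -> S2 y -> S2 (c *: x + y).
Proof. by rewrite /glued !(piDZ hpi) => -> ->. Qed.
Lemma gluedM x y : S2 x -> S2 y -> S2 (x * y).
Proof. by rewrite /glued !(piM hpi) => -> ->. Qed.
Lemma glued1 : S2 1. Proof. by rewrite /glued !(pi1 hpi). Qed.
Lemma glued_rad x : (forall k, pi k x = 0) -> S2 x.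
Proof. by move=> h; rewrite /glued !h. Qed.
Lemma gluedD x y : S2 x -> S2 y -> S2 (x + y).
Proof. by move=> hx hy; have := gluedDZ 1 hx hy; rewrite scale1r. Qed.
Lemma gluedZ c x : S2 x -> S2 (c *: x).
Proof. by rewrite /glued !(piZ hpi) => ->. Qed.
Lemma gluedB x y : S2 x -> S2 y -> S2 (x - y).
Proof. by rewrite /glued !(piB hpi) => -> ->. Qed.

Definition eps := e + f.
Lemma glued_eps : S2 eps.
Proof. by rewrite /glued /eps !(piD hpi) pie_i pie_j pif_i pif_j addr0 add0r. Qed.
Lemma glued_g : S2 (1 - eps).
Proof. by apply: gluedB; [exact: glued1 | exact: glued_eps]. Qed.

Lemma rad_ae a : forall k, pi k (a * e - pi i a *: e) = 0.
Proof.
move=> k; rewrite (piB hpi) (piZ hpi) (piM hpi) hpe.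
by case: (k =P i) => [->|]; rewrite ?mulr1 ?subrr ?mulr0 ?subr0.
Qed.
Lemma rad_fa a : forall k, pi k (f * a - pi j a *: f) = 0.
Proof.
move=> k; rewrite (piB hpi) (piZ hpi) (piM hpi) hpf.
by case: (k =P j) => [->|]; rewrite ?mul1r ?mulr1 ?subrr ?mul0r ?mulr0 ?subr0.
Qed.

Section RepS.
Variable (S : B -> Prop) (X : rep S).
Lemma RZD c x y : S x -> S y -> ract X (c *: x + y) = c *: ract X x + ract X y.
Proof. exact: ract_lin. Qed.
Lemma RepD x y : S x -> S y -> ract X (x + y) = ract X x + ract X y.
Proof. by move=> hx hy; have := RZD 1 hx hy; rewrite !scale1r. Qed.
Hypothesis S0 : S 0.
Lemma Rep0 : ract X 0 = 0.
Proof. by have := RZD (-1) S0 S0; rewrite !scaleN1r oppr0 addr0 addNr. Qed.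
Lemma RepZ c x : S x -> ract X (c *: x) = c *: ract X x.
Proof. by move=> hx; have := RZD c hx S0; rewrite !addr0 Rep0 addr0. Qed.
Lemma RepN x : S x -> ract X (- x) = - ract X x.
Proof. by move=> hx; rewrite -scaleN1r RepZ // scaleN1r. Qed.
Lemma RepB x y : S x -> S y -> ract X (x - y) = ract X x - ract X y.
Proof.
move=> hx hy; have := RZD (-1) hy hx; rewrite !scaleN1r addrC => ->.
by rewrite addrC.
Qed.
Lemma RepM x y : S x -> S y -> ract X (x * y) = ract X x *m ract X y.
Proof. exact: ract_mul. Qed.
End RepS.

Lemma glued0 : S2 0. Proof. by rewrite /glued !(pi0 hpi). Qed.

Definition res (M : rep S1) : rep S2 :=
  @Rep F B S2 (rdim M) (ract M) (fun c x y _ _ => ract_lin M c I I)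
       (fun x y _ _ => ract_mul M I I) (ract1 M).


Lemma glued_ae a : S2 (a * e - pi i a *: e).
Proof. exact: glued_rad (rad_ae a). Qed.
Lemma glued_fa a : S2 (f * a - pi j a *: f).
Proof. exact: glued_rad (rad_fa a). Qed.
Lemma ae_split a : a * e = (a * e - pi i a *: e) + pi i a *: e.
Proof. by rewrite subrK. Qed.
Lemma fa_split a : f * a = (f * a - pi j a *: f) + pi j a *: f.
Proof. by rewrite subrK. Qed.

Section Full.
Variables (M N : rep S1).
Local Notation RM := (ract M).
Local Notation RN := (ract N).

Lemma R1 (X : rep S1) : ract X 1 = 1%:M. Proof. exact: ract1. Qed.

Lemma RN_eps (X : rep S1) : ract X e + ract X f + ract X (1 - eps) = 1%:M.
Proof. by rewrite (RepB X I) // (R1 X) /eps (RepD X) // addrC subrK. Qed.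

Lemma full_ok (h : 'M[F]_(rdim N, rdim M)) : @is_hom F B S2 (res M) (res N) h ->
  exists f' : 'M[F]_(rdim N, rdim M),
    @is_hom F B S1 M N f' /\ @qeq F B m pi S2 T2 (res M) (res N) f' h.
Proof.
move=> hA.
have hA' a : S2 a -> h *m RM a = RN a *m h by move=> Sa; exact: hA.
pose d := RN e *m h *m RM f + RN f *m h *m RM e.
have dl a : S2 a -> RN a *m d = pi i a *: d.
  move=> Sa; rewrite /d mulmxDr !mulmxA -!(RepM N) // scalerDr; congr (_ + _).
    rewrite ae_split (RepD N) // (RepZ N I) // mulmxDl mulmxDl -(hA' _ (glued_ae a)).
    rewrite -mulmxA -(RepM M) // hf (rad_ae a j) scale0r (Rep0 M I) // mulmx0 add0r.
    by rewrite -!scalemxAl.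
  by rewrite hf (RepZ N I) // -!scalemxAl Sa.
have dr a : S2 a -> d *m RM a = pi i a *: d.
  move=> Sa; rewrite /d mulmxDl -!mulmxA -!(RepM M) // scalerDr; congr (_ + _).
    rewrite fa_split (RepD M) // (RepZ M I) // !mulmxDr (hA' _ (glued_fa a)).
    rewrite !mulmxA -(RepM N) // he (rad_fa a i) scale0r (Rep0 N I) // mul0mx add0r.
    by rewrite -scalemxAr Sa.
  by rewrite he (RepZ M I) // -!scalemxAr !mulmxA.
pose f' := h - d.
have fA a : S2 a -> f' *m RM a = RN a *m f'.
  by move=> Sa; rewrite /f' mulmxBl mulmxBr hA' // dl // dr.
have hg : RN (1 - eps) *m h = h *m RM (1 - eps) by rewrite (hA' _ glued_g).
have ge : RM ((1 - eps) * e) = 0.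
  by rewrite mulrBl mul1r /eps mulrDl ee hfe addr0 subrr (Rep0 M I).
have eg : RN (e * (1 - eps)) = 0.
  by rewrite mulrBr mulr1 /eps mulrDr ee ef addr0 subrr (Rep0 N I).
have h1 : h *m RM e = RN e *m h *m RM e + RN f *m h *m RM e.
  rewrite -mulmxDl -{1}(mul1mx h) -(RN_eps N) !mulmxDl hg.
  by rewrite -[h *m RM (1 - eps) *m _]mulmxA -(RepM M) // ge mulmx0 addr0.
have h2 : RN e *m h = RN e *m h *m RM e + RN e *m h *m RM f.
  rewrite -mulmxDr -{1}(mulmx1 (RN e *m h)) -(RN_eps M) !mulmxDr.
  by rewrite -[RN e *m h *m RM (1 - eps)]mulmxA -hg mulmxA -(RepM N) // eg mul0mx addr0.
have fe : f' *m RM e = RN e *m f'.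
  rewrite /f' /d mulmxBl mulmxBr mulmxDl mulmxDr -!mulmxA -!(RepM M) // !mulmxA -!(RepM N) //.
  rewrite hfe ef ee (Rep0 M I) // (Rep0 N I) // mulmx0 !mul0mx add0r addr0.
  have k1 : h *m RM e - RN f *m h *m RM e = RN e *m h *m RM e by rewrite h1 addrK.
  have k2 : RN e *m h - RN e *m h *m RM f = RN e *m h *m RM e by rewrite {1}h2 addrK.
  by rewrite k1 k2.
have fhom : @is_hom F B S1 M N f'.
  move=> x _; pose l := pi i x - pi j x.
  have ga : S2 (x - l *: e).
    by rewrite /glued !(piB hpi) !(piZ hpi) pie_i pie_j mulr0 subr0 mulr1 /l opprB addrC subrK.
  have -> : x = (x - l *: e) + l *: e by rewrite subrK.
  rewrite (RepD M) // (RepZ M I) // (RepD N) // (RepZ N I) // mulmxDr (fA _ ga) -scalemxAr fe.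
  by rewrite [RHS]mulmxDl -scalemxAl.
exists f'; split => //; split; [by move=> x _; exact: fhom | exact: hA | ].
rewrite /f' addrAC subrr add0r -scaleN1r.
apply: (bi_scalar hpi (k0 := i)) => // a Sa.
  by rewrite -scalemxAl dr // scalerA mulrC -scalerA.
by rewrite -scalemxAr dl // scalerA mulrC -scalerA.
Qed.

Lemma diag_T2 n (c : 'I_n -> 'I_m) x : (forall k, c k = i) ->
  diag_mx (\row_k pi (c k) x) = (pi i x)%:M.
Proof.
move=> hc; rewrite -diag_const_mx; congr diag_mx; apply/matrixP => p q.
by rewrite !mxE hc.
Qed.

Lemma faith_ok (u v : 'M[F]_(rdim N, rdim M)) :
  @is_hom F B S1 M N u -> @is_hom F B S1 M N v ->
  @qeq F B m pi S2 T2 (res M) (res N) u v -> @qeq F B m pi S1 T1 M N u v.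
Proof.
move=> hu hv [_ _ [X [[c [Tc hX]] [g0 [h0 [hg hh ephi]]]]]].
split => //.
set p := u - v.
have hp x : p *m RM x = RN x *m p.
  by rewrite /p mulmxBl mulmxBr hu // hv.
have pr a : S2 a -> p *m RM a = pi i a *: p.
  move=> Sa; rewrite /p ephi -mulmxA (hg a Sa) /= (hX a Sa) diag_T2 //.
  by rewrite mul_scalar_mx scalemxAr.
have pl a : S2 a -> RN a *m p = pi i a *: p.
  move=> Sa; rewrite /p ephi mulmxA -(hh a Sa) /= (hX a Sa) diag_T2 //.
  by rewrite mul_mx_scalar -scalemxAl.
have gi : pi i (1 - eps) = 0.
  by rewrite (piB hpi) (pi1 hpi) /eps (piD hpi) pie_i pif_i addr0 subrr.
have dec : p = RN e *m p + RN f *m p.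
  rewrite -mulmxDl -{1}(mul1mx p) -(RN_eps N) [LHS]mulmxDl (pl _ glued_g) gi scale0r.
  by rewrite addr0.
rewrite dec; apply: (in_idealD hpi).
- have -> : RN e *m p = (p *m RM e) *m RM e.
    by rewrite -mulmxA -(RepM M) // ee hp.
  apply: (in_ideal_simple hpi (k0 := i)); first by left.
    by move=> b _; rewrite -(RepM M) // he (RepZ M I).
  move=> b _; rewrite mulmxA -hp -mulmxA -(RepM M) // ae_split (RepD M) // (RepZ M I) //.
  by rewrite mulmxDr (pr _ (glued_ae b)) (rad_ae b i) scale0r add0r scalemxAr.
- have -> : RN f *m p = RN f *m (RN f *m p).
    by rewrite mulmxA -(RepM N) // ff.
  apply: (in_ideal_simple hpi (k0 := j)); first by right.
    move=> b _; rewrite -mulmxA hp mulmxA -(RepM N) // fa_split (RepD N) // (RepZ N I) //.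
    by rewrite mulmxDl (pl _ (glued_fa b)) (rad_fa b i) scale0r add0r scalemxAl.
  by move=> b _; rewrite -(RepM N) // hf (RepZ N I).
Qed.
End Full.

Definition lam (b : B) := pi i b - pi j b.
Definition gl (b : B) := b - lam b *: e.
Lemma glued_gl b : S2 (gl b).
Proof.
by rewrite /glued /gl /lam !(piB hpi) !(piZ hpi) pie_i pie_j mulr0 subr0 mulr1 opprB addrC subrK.
Qed.
Lemma gl_dec b : b = gl b + lam b *: e. Proof. by rewrite subrK. Qed.
Lemma lam_dec G mu : S2 G -> lam (G + mu *: e) = mu.
Proof.
by move=> hG; rewrite /lam !(piD hpi) !(piZ hpi) pie_i pie_j hG mulr1 mulr0 addr0 addrAC subrr add0r.
Qed.
Lemma gl_dec2 G mu : S2 G -> gl (G + mu *: e) = G.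
Proof. by move=> hG; rewrite /gl lam_dec // addrK. Qed.
Lemma gl_glued a : S2 a -> gl a = a.
Proof. by move=> ha; have := gl_dec2 0 ha; rewrite scale0r addr0. Qed.

Definition zeta (b : B) := eps * gl b - pi i (gl b) *: eps.
Lemma rad_zeta b k : pi k (zeta b) = 0.
Proof.
have hg := glued_gl b; rewrite /zeta (piB hpi) (piM hpi) (piZ hpi) [pi i (gl b) * _]mulrC -mulrBr.
case: (k =P i) => [->|ni]; first by rewrite subrr mulr0.
case: (k =P j) => [->|nj]; first by rewrite hg subrr mulr0.
rewrite /eps (piD hpi) hpe hpf.
by move/eqP/negbTE: ni => ->; move/eqP/negbTE: nj => ->; rewrite addr0 mul0r.
Qed.
Lemma glued_zeta b : S2 (zeta b). Proof. exact: glued_rad (rad_zeta b). Qed.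
Lemma gl_lin c x y : gl (c *: x + y) = c *: gl x + gl y.
Proof.
rewrite /gl /lam !(piDZ hpi) scalerBr scalerA.
rewrite -[c * pi i x + pi i y - (c * pi j x + pi j y)]/((c * pi i x + pi i y) - (c * pi j x + pi j y)).
have -> : c * pi i x + pi i y - (c * pi j x + pi j y) = c * (pi i x - pi j x) + (pi i y - pi j y).
  by rewrite mulrBr opprD addrACA.
by rewrite scalerDl -scalerA addrACA opprD.
Qed.
Lemma zeta_lin c x y : zeta (c *: x + y) = c *: zeta x + zeta y.
Proof.
rewrite /zeta gl_lin (piDZ hpi) mulrDr -scalerAr scalerDl -scalerA.
by rewrite opprD addrACA -scalerBr.
Qed.
Lemma eps_eps : eps * eps = eps.
Proof. by rewrite /eps mulrDl !mulrDr ee ef hfe ff addr0 add0r. Qed.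
Lemma eps_zeta b : eps * zeta b = zeta b.
Proof. by rewrite /zeta mulrBr mulrA eps_eps -scalerAr eps_eps. Qed.
Lemma e_eps : e * eps = e.
Proof. by rewrite /eps mulrDr ee ef addr0. Qed.
Lemma w_zeta a b : (a * e - pi i a *: e) * zeta b = 0.
Proof.
have weps : (a * e - pi i a *: e) * eps = a * e - pi i a *: e.
  by rewrite mulrBl -mulrA e_eps -scalerAl e_eps.
rewrite /zeta mulrBr mulrA weps -scalerAr weps.
by rewrite mulrBl -mulrA he -scalerAl he -scalerAr scalerA mulrC -scalerA -scalerBr subrr.
Qed.
Lemma eps_a a : S2 a -> eps * a = zeta a + pi i a *: eps.
Proof. by move=> ha; rewrite /zeta gl_glued // subrK. Qed.
Lemma a_eps a : S2 a -> a * eps = (a * e - pi i a *: e) + pi i a *: eps.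
Proof.
move=> ha; rewrite /eps mulrDr hf -ha scalerDr addrA subrK //.
Qed.

Section Ess.
Variable Y : rep S2.
Local Notation R := (ract Y).
Local Notation n := (rdim Y).

Lemma RY_zeta_lin c x y : R (zeta (c *: x + y)) = c *: R (zeta x) + R (zeta y).
Proof. by rewrite zeta_lin (RZD Y c (glued_zeta x) (glued_zeta y)). Qed.

Lemma zeta0 : zeta 0 = 0.
Proof. by rewrite /zeta /gl /lam !(pi0 hpi) subrr !scale0r subrr mulr0 (pi0 hpi) scale0r subrr. Qed.

Lemma Phi_sum k (c : 'I_k -> F) (u : 'I_k -> B) :
  (R (zeta (\sum_(l < k) c l *: u l)))^T = \sum_(l < k) c l *: (R (zeta (u l)))^T.
Proof.
elim: k c u => [|k IH] c u.
  by rewrite !big_ord0 zeta0 (Rep0 Y glued0) trmx0.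
rewrite !big_ord_recr /= addrC RY_zeta_lin linearD /= linearZ /=.
by rewrite (IH (fun l => c (widen_ord (leqnSn k) l)) (fun l => u (widen_ord (leqnSn k) l))) addrC.
Qed.

Local Notation bs := (vbasis (fullv : {vspace B})).
Definition Sm : 'M[F]_n := (\sum_(l < \dim (fullv : {vspace B})) <<(R (zeta bs`_l))^T>>)%MS.
Definition Pi := pinvmx Sm *m Sm.
Definition Q0 := Pi^T.
Definition P := R eps.

Lemma zeta_sub a : S2 a -> ((R (zeta a))^T <= Sm)%MS.
Proof.
move=> _; rewrite (coord_vbasis (memvf a)) Phi_sum.
apply: summx_sub => l _; apply: scalemx_sub.
by apply: (sumsmx_sup l) => //; rewrite genmxE submx_refl.
Qed.

Lemma Sm_ker (C : 'M[F]_(n, n)) : (forall b, (R (zeta b))^T *m C = 0) -> Sm *m C = 0.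
Proof.
move=> hC; apply/sub_kermxP; apply/sumsmx_subP => l _.
by rewrite genmxE; apply/sub_kermxP; exact: hC.
Qed.

Lemma PiPi : Pi *m Pi = Pi.
Proof. by rewrite {1}/Pi mulmxA mulmxKpV // /Pi submxMl. Qed.

Lemma Pi_ker (C : 'M[F]_(n, n)) : (forall b, (R (zeta b))^T *m C = 0) -> Pi *m C = 0.
Proof. by move=> hC; rewrite /Pi -mulmxA Sm_ker // mulmx0. Qed.

Lemma Q0Q0 : Q0 *m Q0 = Q0.
Proof. by rewrite /Q0 -trmx_mul PiPi. Qed.

Lemma PQ0 : P *m Q0 = Q0.
Proof.
apply: trmx_inj; rewrite /Q0 trmx_mul !trmxK.
apply/eqP; rewrite -subr_eq0 -{2}(mulmx1 Pi) -mulmxBr; apply/eqP; apply: Pi_ker => b.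
by rewrite mulmxBr mulmx1 -trmx_mul /P -(RepM Y glued_eps (glued_zeta b)) eps_zeta subrr.
Qed.

Lemma Q0zeta a : S2 a -> Q0 *m R (zeta a) = R (zeta a).
Proof.
move=> ha; apply: trmx_inj; rewrite /Q0 trmx_mul trmxK /Pi mulmxA mulmxKpV //.
exact: zeta_sub.
Qed.

Lemma RwQ0 a : R (a * e - pi i a *: e) *m Q0 = 0.
Proof.
apply: trmx_inj; rewrite /Q0 trmx_mul trmxK trmx0; apply: Pi_ker => b.
by rewrite -trmx_mul -(RepM Y (glued_ae a) (glued_zeta b)) w_zeta (Rep0 Y glued0) trmx0.
Qed.

Definition E := P - Q0 *m P.
Lemma PP : P *m P = P.
Proof. by rewrite /P -(RepM Y glued_eps glued_eps) eps_eps. Qed.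

Lemma EE : E *m E = E.
Proof.
rewrite /E mulmxBl !mulmxBr PP mulmxA PQ0 -mulmxA PP mulmxA -(mulmxA Q0 P Q0) PQ0 Q0Q0.
by rewrite subrr subr0.
Qed.

Lemma ER a : S2 a -> E *m R a = pi i a *: E.
Proof.
move=> ha; have hP : P *m R a = R (zeta a) + pi i a *: P.
  by rewrite /P -(RepM Y glued_eps ha) eps_a // (RepD Y (glued_zeta a) (gluedZ _ glued_eps)) (RepZ Y glued0 _ glued_eps).
rewrite /E mulmxBl -mulmxA hP mulmxDr Q0zeta // -scalemxAr.
by rewrite opprD addrACA subrr add0r scalerBr.
Qed.

Lemma RE a : S2 a -> R a *m E = R (a * e - pi i a *: e) + pi i a *: E.
Proof.
move=> ha; have hP : R a *m P = R (a * e - pi i a *: e) + pi i a *: P.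
  by rewrite /P -(RepM Y ha glued_eps) a_eps // (RepD Y (glued_ae a) (gluedZ _ glued_eps)) (RepZ Y glued0 _ glued_eps).
have hQ : R a *m Q0 = pi i a *: Q0.
  by rewrite -PQ0 mulmxA hP mulmxDl RwQ0 add0r -scalemxAl PQ0.
rewrite /E mulmxBr hP mulmxA hQ -scalemxAl scalerBr addrA //.
Qed.

Definition RX (b : B) : 'M[F]_n := R (gl b) + lam b *: E.

Lemma RX_dec G mu : S2 G -> RX (G + mu *: e) = R G + mu *: E.
Proof. by move=> hG; rewrite /RX gl_dec2 // lam_dec. Qed.

Lemma mul_dec a a' l l' : S2 a' ->
  (a + l *: e) * (a' + l' *: e) =
  (a * a' + l' *: (a * e - pi i a *: e)) + (l' * pi i a + l * pi i a' + l * l') *: e.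
Proof.
move=> ha'; rewrite mulrDl !mulrDr -!scalerAl -!scalerAr he ee !scalerA.
rewrite scalerBr scalerA !scalerDl -!addrA; congr (_ + _); rewrite !addrA addrNK.
by [].
Qed.

Lemma RX_lin (c : F) x y : S1 x -> S1 y -> RX (c *: x + y) = c *: RX x + RX y.
Proof.
move=> _ _.
have -> : c *: x + y = (c *: gl x + gl y) + (c * lam x + lam y) *: e.
  by rewrite {1}(gl_dec x) {1}(gl_dec y) scalerDr scalerA addrACA -scalerDl.
rewrite RX_dec; last by apply: gluedDZ; exact: glued_gl.
rewrite (RZD Y c (glued_gl x) (glued_gl y)) /RX scalerDl [in RHS]scalerDr scalerA.
by rewrite addrACA.
Qed.

Lemma mat_ident (Ra Ra' Rw EE : 'M[F]_n) (l l' pa pa' : F) :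
  Ra *m EE = Rw + pa *: EE -> EE *m Ra' = pa' *: EE -> EE *m EE = EE ->
  Ra *m Ra' + l' *: Rw + (l' * pa + l * pa' + l * l') *: EE = (Ra + l *: EE) *m (Ra' + l' *: EE).
Proof.
move=> h1 h2 h3; rewrite mulmxDl !mulmxDr -!scalemxAl -!scalemxAr h1 h2 h3.
by rewrite scalerDr !scalerA !scalerDl !addrA.
Qed.

Lemma RX_mul x y : S1 x -> S1 y -> RX (x * y) = RX x *m RX y.
Proof.
move=> _ _.
rewrite {1}(gl_dec x) {1}(gl_dec y) mul_dec; last exact: glued_gl.
have hg := glued_gl x; have hg' := glued_gl y.
rewrite RX_dec; last first.
  by apply: gluedD; [apply: gluedM | apply: gluedZ; exact: glued_ae].
rewrite (RepD Y (gluedM hg hg') (gluedZ _ (glued_ae _))) (RepZ Y glued0 _ (glued_ae _)).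
rewrite (RepM Y hg hg') /RX.
apply: mat_ident; [exact: RE | exact: ER | exact: EE].
Qed.

Lemma RX1 : RX 1 = 1%:M.
Proof.
by rewrite /RX /gl /lam !(pi1 hpi) subrr !scale0r subr0 addr0 (ract1 Y).
Qed.

Definition Xrep : rep S1 := @Rep F B S1 n RX RX_lin RX_mul RX1.

Lemma ess_ok : exists (X : rep S1) (u : 'M[F]_(rdim Y, rdim (res X))) (v : 'M[F]_(rdim (res X), rdim Y)),
  [/\ @is_hom F B S2 (res X) Y u, @is_hom F B S2 Y (res X) v,
      @qeq F B m pi S2 T2 (res X) (res X) (v *m u) 1%:M &
      @qeq F B m pi S2 T2 Y Y (u *m v) 1%:M].
Proof.
have hR a : S2 a -> RX a = R a.
  by move=> ha; rewrite /RX gl_glued // /lam ha subrr scale0r addr0.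
have h1 : @is_hom F B S2 (res Xrep) Y 1%:M.
  by move=> x hx; rewrite /= hR // mul1mx mulmx1.
have h2 : @is_hom F B S2 Y (res Xrep) 1%:M.
  by move=> x hx; rewrite /= hR // mul1mx mulmx1.
have q (X : rep S2) : @qeq F B m pi S2 T2 X X 1%:M 1%:M.
  have hh : @is_hom F B S2 X X 1%:M by move=> x hx; rewrite mul1mx mulmx1.
  by split => //; rewrite subrr; exact: (in_ideal0 hpi (k0 := i)).
by exists Xrep, 1%:M, 1%:M; rewrite !mul1mx; split => //; apply: q.
Qed.
End Ess.
End Main.

Lemma ideal_transfer (F : fieldType) (B : falgType F) (m : nat) (pi : 'I_m -> B -> F)
  (i j : 'I_m) (M N : rep (fun _ : B => True)) (u : 'M[F]_(rdim N, rdim M)) :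
  in_ideal pi (fun k => k = i \/ k = j) u ->
  @in_ideal F B m pi (glued pi i j) (fun k => k = i) (res pi i j M) (res pi i j N) u.
Proof.
move=> [X [[c [Tc hX]] [g0 [h0 [hg hh ->]]]]].
exists (res pi i j X); split.
  exists (fun _ => i); split => // x hx; rewrite /= hX //; congr diag_mx.
  by apply/matrixP => p q; rewrite !mxE; case: (Tc q) => ->.
by exists g0, h0; split => // x _; [exact: hg | exact: hh].
Qed.

Unset Implicit Arguments.

Theorem theorem2p2 (F : closedFieldType) (B : falgType F) (m : nat)
    (pi : 'I_m -> B -> F) (i j : 'I_m) :
  top_chars pi -> i != j ->
  no_arrow_ends_at pi i -> no_arrow_starts_at pi j ->
  qcat_equiv pi (fun _ => True) (fun k => k = i \/ k = j)
                (glued pi i j) (fun k => k = i).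
Proof.
move=> hpi hij hna hns.
have [e0 [he0 hpe0]] := exists_e hpi hna.
have [f [hf hpf]] := exists_f hpi hns.
have ff : f * f = f by rewrite hf hpf eqxx scale1r.
pose e := e0 - f * e0.
have he b : e * b = pi i b *: e.
  by rewrite /e mulrBl -mulrA he0 -scalerAr scalerBr.
have hpe k : pi k e = (k == i)%:R.
  rewrite /e (piB hpi) (piM hpi) hpf hpe0.
  case: (k =P i) => [->|]; last by rewrite mulr0 subr0.
  by rewrite (negbTE hij) mul0r subr0.
have hfe : f * e = 0 by rewrite /e mulrBr mulrA ff subrr.
exists (res pi i j), (fun M N g => g).
have q0 (X : rep (glued pi i j)) (Y : rep (glued pi i j)) (g : 'M[F]_(rdim Y, rdim X)) :
    is_hom g -> qeq pi (fun k => k = i) g g.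
  by move=> hg; split => //; rewrite subrr; exact: (in_ideal0 hpi (k0 := i)).
split; first by move=> M N g hg x _; exact: hg.
split.
  move=> M N g h [hg hh hI]; split; [by move=> x _; exact: hg | by move=> x _; exact: hh |].
  exact: ideal_transfer.
split.
  by move=> M; apply: q0 => x _; rewrite mul1mx mulmx1.
split.
  move=> M N P g h hg hh; apply: q0 => x _ /=.
  by rewrite mulmxA -hh // -!mulmxA hg.
split.
  move=> M N u v hu hv; exact: (faith_ok hpi hij he hpe hf hpf).
split.
  move=> M N h hh; exact: (full_ok hpi hij he hpe hf hpf hfe hh).
move=> Y; exact: (ess_ok hpi hij he hpe hf hpf hfe Y).
Qed.
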